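(* For $n\in\mathbb{N}$ and $M\in\mathbb{N}_0$, \[ \frac{2\pi}{12n-1}\sum_{k\ge M+1}\frac{\left|A_k^{[2]}(n,0)\right|}{k}I_2\left(\frac{\pi\sqrt{12n-1}}{3k}\right)\le f_M(n). \]
   Context: $I_2$ is the modified Bessel function of the first kind of order $2$. For $k\in\mathbb{N}$ and $0\le h<k$ with $\gcd(h,k)=1$, let $h'$ be an inverse of $h$ modulo $k$, and let $s(h,k):=\sum_{j=1}^{k-1}\left(\frac jk-\frac12\right)\left(\frac{hj}{k}-\left\lfloor\frac{hj}{k}\right\rfloor-\frac12\right)$ be the Dedekind sum. For integers $n,m$ define $A_k^{[2]}(n,m):=\sum_{0\le h<k,\ \gcd(h,k)=1}e^{2\pi i s(h,k)+\frac{2\pi i}{k}(nh+mh')}$. Finally \[ f_M(n):=\frac{\pi^5}{108}+\delta_{M\le\frac{\pi\sqrt{12n-1}}{3}-1}\frac{2\sqrt{6(M+1)}}{(12n-1)^{5/4}}\left(\frac{\pi\sqrt{12n-1}}{3}-M\right)e^{\frac{\pi\sqrt{12n-1}}{3(M+1)}}, \] where $\delta_S=1$ if the statement $S$ holds and $0$ otherwise. *)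

(* Defs.v *)
From Stdlib Require Import Reals Lra Lia ZArith Arith List.
From Coquelicot Require Import Coquelicot.
Open Scope R_scope.

Definition I2 (x : R) : R :=
  Series (fun m : nat => (x / 2) ^ (2 * m + 2) / (INR (fact m) * INR (fact (m + 2)))).

(* Floor of a real: Int_part x = up x - 1 is the floor. *)
Definition frac_part (x : R) : R := x - IZR (Int_part x).

Definition dedekind_s (h k : nat) : R :=
  fold_right Rplus 0
    (map (fun j : nat =>
            (INR j / INR k - 1 / 2) *
            (frac_part (INR h * INR j / INR k) - 1 / 2))
         (seq 1 (k - 1))).

(* An inverse h' of h modulo k, chosen in [0,k) (the least one); for k = 1 it is 0. *)
Definition inv_mod (h k : nat) : nat :=
  match find (fun j => Nat.eqb ((h * j) mod k) (1 mod k)) (seq 0 k) with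
  | Some j => j
  | None => 0%nat
  end.

Definition cexpi (t : R) : C := (cos t, sin t).

Definition A2 (k : nat) (n m : Z) : C :=
  fold_right Cplus (RtoC 0)
    (map (fun h : nat =>
            cexpi (2 * PI * dedekind_s h k
                   + 2 * PI / INR k * (IZR n * INR h + IZR m * INR (inv_mod h k))))
         (filter (fun h => Nat.eqb (Nat.gcd h k) 1) (seq 0 k))).

Definition fM (M n : nat) : R :=
  let X := 12 * INR n - 1 in
  PI ^ 5 / 108 +
  (if Rle_dec (INR M) (PI * sqrt X / 3 - 1)
   then 2 * sqrt (6 * (INR M + 1)) / Rpower X (5 / 4)
        * (PI * sqrt X / 3 - INR M)
        * exp (PI * sqrt X / (3 * (INR M + 1)))
   else 0).

Definition term6p2 (n k : nat) : R :=
  Cmod (A2 k (Z.of_nat n) 0) / INR k * I2 (PI * sqrt (12 * INR n - 1) / (3 * INR k)).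

(* Main.v *)
Require Import Defs.
From Stdlib Require Import Reals Lra Lia ZArith Arith List.
From Coquelicot Require Import Coquelicot.
Open Scope R_scope.

Lemma PI_gt : 2.89 < PI.
Proof. pose proof (PI_ineq 1) as [H _]. unfold tg_alt, PI_tg in H. simpl in H. lra. Qed.

Lemma nonneg_bounded (a : nat -> R) L :
  (forall n, 0 <= a n) -> (forall N, sum_f_R0 a N <= L) ->
  ex_series a /\ Series a <= L.
Proof.
  intros Ha HL.
  assert (Hg : Un_growing (sum_f_R0 a)).
  { intro n. simpl. specialize (Ha (S n)). lra. }
  assert (Hb : has_ub (sum_f_R0 a)).
  { exists L. intros x [n ->]. apply HL. }
  destruct (growing_cv _ Hg Hb) as [l Hl].
  assert (Hs : is_series a l) by (apply is_series_Reals; exact Hl).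
  split. { exists l; exact Hs. }
  rewrite (is_series_unique _ _ Hs).
  assert (Hc : Un_cv (fun _ => L) l -> True) by auto.
  apply (Rle_cv_lim (Un := sum_f_R0 a) (Vn := fun _ => L)); auto.
  intros eps He. exists 0%nat. intros. unfold Rdist. rewrite Rminus_diag_eq; auto.
  rewrite Rabs_R0. lra.
Qed.

Definition tI (x : R) (m : nat) : R :=
  (x / 2) ^ (2 * m + 2) / (INR (fact m) * INR (fact (m + 2))).

Lemma I2_eq x : I2 x = Series (tI x).
Proof. reflexivity. Qed.

Lemma fact_ge1 m : 1 <= INR (fact m).
Proof. replace 1 with (INR 1) by reflexivity. apply le_INR. pose proof (lt_O_fact m). lia. Qed.

Lemma fact2_ge2 m : 2 <= INR (fact (m + 2)).
Proof.
  replace 2 with (INR 2) by (simpl; ring). apply le_INR.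
  replace (m + 2)%nat with (S (S m)) by lia. rewrite !fact_simpl.
  pose proof (lt_O_fact m). nia.
Qed.

Lemma tI_nonneg x m : 0 <= x -> 0 <= tI x m.
Proof.
  intros Hx. unfold tI. apply Rdiv_le_0_compat.
  - apply pow_le. lra.
  - pose proof (fact_ge1 m). pose proof (fact2_ge2 m). nra.
Qed.

Lemma tI_mono x y m : 0 <= x <= y -> tI x m <= tI y m.
Proof.
  intros Hx. unfold tI, Rdiv. apply Rmult_le_compat_r.
  - left. apply Rinv_0_lt_compat. pose proof (fact_ge1 m). pose proof (fact2_ge2 m). nra.
  - apply pow_incr. lra.
Qed.

Lemma tI_small x m : 0 <= x <= 1 -> tI x m <= x ^ 2 / 8 * (1/4) ^ m.
Proof.
  intros Hx. unfold tI.
  replace (2 * m + 2)%nat with (2 * (m + 1))%nat by lia. rewrite pow_mult.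
  rewrite pow_add, pow_1.
  assert (H0 : 0 <= (x/2)^2 <= 1/4) by (split; nra).
  assert (H1 : ((x/2)^2)^m <= (1/4)^m) by (apply pow_incr; lra).
  assert (H2 : 0 <= ((x/2)^2)^m) by (apply pow_le; lra).
  pose proof (fact_ge1 m). pose proof (fact2_ge2 m).
  set (d := INR (fact m) * INR (fact (m + 2))).
  assert (Hd : 2 <= d) by (unfold d; nra).
  apply (Rle_trans _ (((x / 2) ^ 2) ^ m * (x / 2) ^ 2 / 2)).
  - unfold Rdiv at 2 3. apply Rmult_le_compat_l. nra. apply Rinv_le_contravar; lra.
  - replace (x ^ 2 / 8 * (1 / 4) ^ m) with ((1/4)^m * (x/2)^2 / 2) by (field).
    unfold Rdiv. apply Rmult_le_compat_r. lra. apply Rmult_le_compat_r; nra.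
Qed.

Lemma sum_scal x (A : nat -> R) N : sum_f_R0 (fun i => x * A i) N = x * sum_f_R0 A N.
Proof. induction N; simpl; [ring | rewrite IHN; ring]. Qed.

Lemma I2_small x : 0 <= x <= 1 -> ex_series (tI x) /\ I2 x <= x ^ 2 / 6.
Proof.
  intros Hx. rewrite I2_eq. apply nonneg_bounded.
  - intros; apply tI_nonneg; lra.
  - intro N. apply (Rle_trans _ (sum_f_R0 (fun m => x ^ 2 / 8 * (1/4) ^ m) N)).
    + apply sum_Rle. intros; apply tI_small; auto.
    + rewrite sum_scal, tech3 by lra.
      assert (0 <= (1/4) ^ S N) by (apply pow_le; lra).
      assert (0 <= x ^ 2) by nra.
      replace (x ^ 2 / 6) with (x ^ 2 / 8 * (4/3)) by field.
      apply Rmult_le_compat_l. lra.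
      apply (Rmult_le_reg_r (1 - 1/4)). lra. field_simplify; lra.
Qed.

Lemma exp_partial y K : 0 <= y -> sum_f_R0 (fun i => / INR (fact i) * y ^ i) K <= exp y.
Proof.
  intros Hy. unfold exp. destruct (exist_exp y) as [l Hl]. simpl.
  apply sum_incr. exact Hl. intros i.
  apply Rmult_le_pos. left; apply Rinv_0_lt_compat, INR_fact_lt_0. apply pow_le; lra.
Qed.

Lemma sum_pairs (e : nat -> R) N :
  sum_f_R0 (fun m => e (2 * m + 2)%nat + e (2 * m + 3)%nat) N + e 0%nat + e 1%nat
  = sum_f_R0 e (2 * N + 3).
Proof.
  induction N.
  - simpl. ring.
  - replace (2 * S N + 3)%nat with (S (S (2 * N + 3))) by lia.
    rewrite !tech5, <- IHN.
    replace (S (2 * N + 3)) with (2 * S N + 2)%nat by lia.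
    replace (S (2 * S N + 2)) with (2 * S N + 3)%nat by lia. ring.
Qed.

Definition Ff (m : nat) : R := INR (fact (2 * m + 2)).
Definition Dd (m : nat) : R := 4 ^ (m + 1) * INR (fact m) * INR (fact (m + 2)).

Lemma Ff_S m : Ff (S m) = (2 * INR m + 4) * (2 * INR m + 3) * Ff m.
Proof.
  unfold Ff. replace (2 * S m + 2)%nat with (S (S (2 * m + 2))) by lia.
  rewrite !fact_simpl, !mult_INR, !S_INR, plus_INR, mult_INR. simpl (INR 2). ring.
Qed.

Lemma Dd_S m : Dd (S m) = 4 * (INR m + 1) * (INR m + 3) * Dd m.
Proof.
  unfold Dd. replace (S m + 2)%nat with (S (m + 2)) by lia.
  rewrite !fact_simpl, !mult_INR, !S_INR, plus_INR. replace (S m + 1)%nat with (S (m + 1)) by lia.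
  simpl pow. simpl (INR 2). ring.
Qed.

Lemma FD_inv m : Ff m ^ 2 * (INR m + 2) ^ 2 * (3 * INR m + 4) <= (INR m + 1) ^ 2 * Dd m ^ 2.
Proof.
  induction m.
  - unfold Ff, Dd. simpl. lra.
  - rewrite Ff_S, Dd_S, S_INR.
    set (p := Ff m ^ 2) in *. set (q := Dd m ^ 2) in *. set (u := INR m) in *.
    assert (Hu : 0 <= u) by apply pos_INR.
    assert (Hp : 0 <= p) by (unfold p; nra).
    assert (Hpoly : (2*u+3)^2*(3*u+7) <= 4*(u+2)^2*(3*u+4)) by nra.
    assert (H1 : (2*u+3)^2*(3*u+7)*p <= 4*(u+1)^2*q) by nra.
    replace (((2 * u + 4) * (2 * u + 3) * Ff m) ^ 2 * (u + 1 + 2) ^ 2 * (3 * (u + 1) + 4))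
      with (4 * (u+2)^2 * (u+3)^2 * ((2*u+3)^2*(3*u+7)*p)) by (unfold p; ring).
    replace ((u + 1 + 1) ^ 2 * (4 * (u + 1) * (u + 3) * Dd m) ^ 2)
      with (4 * (u+2)^2 * (u+3)^2 * (4*(u+1)^2*q)) by (unfold q; ring).
    apply Rmult_le_compat_l; [nra | exact H1].
Qed.

Lemma FD_main m : Ff m ^ 2 * (2 * INR m + 3) <= Dd m ^ 2.
Proof.
  pose proof (FD_inv m). pose proof (pos_INR m).
  assert (0 <= Ff m ^ 2) by nra.
  assert (0 <= Dd m ^ 2) by nra.
  apply (Rmult_le_reg_r ((INR m + 2)^2)). nra.
  apply (Rle_trans _ (Ff m ^ 2 * (INR m + 2) ^ 2 * (3 * INR m + 4))).
  { replace (Ff m ^ 2 * (2 * INR m + 3) * (INR m + 2) ^ 2) with (Ff m ^ 2 * (INR m + 2) ^ 2 * (2 * INR m + 3)) by ring.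
    apply Rmult_le_compat_l. nra. lra. }
  apply (Rle_trans _ _ _ H).
  rewrite Rmult_comm. apply Rmult_le_compat_l. auto. nra.
Qed.

Lemma Dd_pos m : 0 < Dd m.
Proof.
  unfold Dd. pose proof (fact_ge1 m). pose proof (fact2_ge2 m).
  assert (0 < 4 ^ (m + 1)) by (apply pow_lt; lra). repeat apply Rmult_lt_0_compat; lra.
Qed.

Definition ee (y : R) (i : nat) : R := / INR (fact i) * y ^ i.

Lemma Ff_pos m : 0 < Ff m.
Proof. unfold Ff. apply INR_fact_lt_0. Qed.

Lemma tI_big y m : 0 < y -> tI y m <= (ee y (2 * m + 2) + ee y (2 * m + 3)) / (2 * sqrt y).
Proof.
  intros Hy.
  assert (H4 : (y/2)^(2*m+2) * 4^(m+1) = y^(2*m+2)).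
  { replace (2*m+2)%nat with (2*(m+1))%nat by lia. rewrite !pow_mult, <- Rpow_mult_distr.
    f_equal. field. }
  assert (Ht : tI y m = y^(2*m+2) / Dd m).
  { unfold tI, Dd. rewrite <- H4. pose proof (fact_ge1 m). pose proof (fact2_ge2 m).
    field. repeat split; try lra. apply pow_nonzero. lra. }
  assert (He3 : ee y (2*m+3) = y^(2*m+2) * y / ((2 * INR m + 3) * Ff m)).
  { unfold ee, Ff. replace (2*m+3)%nat with (S (2*m+2)) by lia.
    rewrite fact_simpl, mult_INR, S_INR, plus_INR, mult_INR. simpl (INR 2). simpl pow.
    pose proof (INR_fact_lt_0 (2*m+2)). pose proof (pos_INR m). field. split; lra. }
  assert (He2 : ee y (2*m+2) = y^(2*m+2) / Ff m) by (unfold ee, Ff; field; apply Rgt_not_eq, INR_fact_lt_0).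
  rewrite Ht, He2, He3.
  pose proof (FD_main m) as Hfd. pose proof (Ff_pos m) as HF. pose proof (Dd_pos m) as HD.
  pose proof (pos_INR m) as Hm.
  assert (HY : 0 < y ^ (2*m+2)) by (apply pow_lt; lra).
  set (Y := y ^ (2*m+2)) in *. set (F := Ff m) in *. set (D := Dd m) in *.
  set (d := 2 * INR m + 3) in *.
  assert (Hd : 0 < d) by (unfold d; lra).
  assert (Hs : 0 < sqrt y) by (apply sqrt_lt_R0; lra).
  assert (Hss : sqrt y * sqrt y = y) by (apply sqrt_sqrt; lra).
  set (s := sqrt y) in *.
  assert (Hk : 2 * s * F * d <= D * (d + y)).
  { assert (F ^ 2 * d ^ 2 <= D ^ 2 * d). { replace (F ^ 2 * d ^ 2) with ((F ^ 2 * d) * d) by ring. apply Rmult_le_compat_r; lra. }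
    assert (H0 : 0 <= (D * s - F * d) ^ 2) by apply pow2_ge_0.
    assert (H1 : D * (2 * s * F * d) <= D * (D * (d + y))).
    { rewrite <- Hss. replace (D * (D * (d + s * s))) with (D ^ 2 * d + D^2 * (s * s)) by ring.
      replace ((D * s - F * d) ^ 2) with (D ^ 2 * (s * s) + F ^ 2 * d ^ 2 - D * (2 * s * F * d)) in H0 by ring.
      lra. }
    apply Rmult_le_reg_l in H1; lra. }
  assert (Heq : (Y / F + Y * y / (d * F)) / (2 * s) - Y / D
     = Y * (D * (d + y) - 2 * s * F * d) / (D * (2 * d * F * s))).
  { field. lra. }
  assert (0 <= Y * (D * (d + y) - 2 * s * F * d) / (D * (2 * d * F * s))).
  { apply Rdiv_le_0_compat. nra. apply Rmult_lt_0_compat. lra.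
    repeat apply Rmult_lt_0_compat; lra. }
  lra.
Qed.

Lemma I2_big y : 0 < y -> ex_series (tI y) /\ I2 y <= exp y / (2 * sqrt y).
Proof.
  intros Hy. rewrite I2_eq. apply nonneg_bounded.
  - intros; apply tI_nonneg; lra.
  - intro N.
    assert (Hs : 0 < sqrt y) by (apply sqrt_lt_R0; lra).
    apply (Rle_trans _ (sum_f_R0 (fun m => / (2 * sqrt y) * (ee y (2 * m + 2) + ee y (2 * m + 3))) N)).
    + apply sum_Rle. intros m _. rewrite Rmult_comm. apply tI_big; auto.
    + rewrite sum_scal. unfold Rdiv. rewrite (Rmult_comm (exp y)). apply Rmult_le_compat_l.
      left; apply Rinv_0_lt_compat; lra.
      pose proof (sum_pairs (ee y) N). pose proof (exp_partial y (2 * N + 3)).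
      assert (0 <= ee y 0 /\ 0 <= ee y 1).
      { unfold ee; simpl. split; nra. }
      unfold ee in *. lra.
Qed.

Lemma I2_nonneg x : 0 < x -> 0 <= I2 x.
Proof.
  intros Hx. destruct (I2_big x Hx) as [He _]. rewrite I2_eq.
  pose proof (Series_correct _ He) as Hc. apply is_series_Reals in Hc.
  apply (Rle_trans _ (sum_f_R0 (tI x) 0)).
  simpl. apply tI_nonneg; lra.
  apply sum_incr. exact Hc. intros; apply tI_nonneg; lra.
Qed.

Lemma I2_mono x y : 0 <= x <= y -> 0 < y -> I2 x <= I2 y.
Proof.
  intros Hx Hy. destruct (I2_big y Hy) as [He _]. rewrite !I2_eq.
  apply Series_le; auto. intros; split; [apply tI_nonneg; lra | apply tI_mono; lra].
Qed.

Lemma Cmod_cexpi t : Cmod (cexpi t) = 1.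
Proof.
  unfold Cmod, cexpi; simpl.
  replace (cos t * (cos t * 1) + sin t * (sin t * 1)) with 1. apply sqrt_1.
  pose proof (sin2_cos2 t). unfold Rsqr in H. lra.
Qed.

Lemma fold_bound (f : nat -> C) l : (forall h, Cmod (f h) <= 1) ->
  Cmod (fold_right Cplus (RtoC 0) (map f l)) <= INR (length l).
Proof.
  intros Hf. induction l as [|a l IH]; cbn [fold_right map length].
  - rewrite Cmod_0. simpl. lra.
  - eapply Rle_trans. apply Cmod_triangle. rewrite S_INR. specialize (Hf a). lra.
Qed.

Lemma A2_bound k n : Cmod (A2 k n 0) <= INR k.
Proof.
  unfold A2. eapply Rle_trans. apply fold_bound. intros; rewrite Cmod_cexpi; lra.
  apply le_INR. eapply Nat.le_trans. apply filter_length_le. rewrite length_seq. lia.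
Qed.

Lemma term_bounds n k : (1 <= k)%nat -> 0 < PI * sqrt (12 * INR n - 1) / (3 * INR k) ->
  0 <= term6p2 n k <= I2 (PI * sqrt (12 * INR n - 1) / (3 * INR k)).
Proof.
  intros Hk Hx. unfold term6p2.
  pose proof (I2_nonneg _ Hx). pose proof (A2_bound k (Z.of_nat n)).
  pose proof (Cmod_ge_0 (A2 k (Z.of_nat n) 0)).
  assert (Hk' : 1 <= INR k) by (replace 1 with (INR 1) by reflexivity; apply le_INR; lia).
  set (I := I2 _) in *. set (a := Cmod _) in *.
  assert (0 <= a / INR k <= 1).
  { split. apply Rdiv_le_0_compat; lra. apply (Rmult_le_reg_r (INR k)). lra.
    unfold Rdiv. rewrite Rmult_assoc, Rinv_l by lra. lra. }
  split; nra.
Qed.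

Lemma sum_inv_sq N : sum_f_R0 (fun j => / (INR j + 1) ^ 2) N <= 2 - 2 / (INR N + 2).
Proof.
  induction N.
  - simpl. lra.
  - rewrite tech5. rewrite S_INR.
    pose proof (pos_INR N).
    set (u := INR N + 2) in *.
    replace (INR N + 1 + 1) with u by (unfold u; ring).
    replace (INR N + 1 + 2) with (u + 1) by (unfold u; ring).
    assert (Hu : 2 <= u) by (unfold u; lra).
    assert (E : 2 / u - 2 / (u + 1) = / (u * (u + 1) / 2)) by (field; lra).
    assert (/ u ^ 2 <= / (u * (u + 1) / 2)).
    { apply Rinv_le_contravar. nra. nra. }
    lra.
Qed.

Definition ind (M : nat) (c : R) (j : nat) : R :=
  if Rle_dec (INR (j + M + 1)) c then 1 else 0.

Lemma count_bound M c N : 0 <= c - INR M ->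
  sum_f_R0 (ind M c) N <= INR (S N) /\ sum_f_R0 (ind M c) N <= c - INR M.
Proof.
  intros H0. induction N.
  - simpl. unfold ind. destruct Rle_dec as [h|h].
    + rewrite !plus_INR in h. simpl in h. lra.
    + lra.
  - rewrite tech5. set (S0 := sum_f_R0 (ind M c) N) in *. unfold ind. destruct Rle_dec as [h|h].
    + rewrite !plus_INR, S_INR in h. simpl in h. rewrite !S_INR in *. lra.
    + rewrite !S_INR in *. lra.
Qed.

Lemma numB (X M : R) : 11 <= X -> 0 <= M ->
  2 * PI / X * / (2 * sqrt (PI * sqrt X / (3 * (M + 1))))
  <= 2 * sqrt (6 * (M + 1)) / Rpower X (5 / 4).
Proof.
  intros HX HM.
  pose proof PI_gt. pose proof PI_4.
  set (q := Rpower X (1/4)).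
  assert (Hq : 0 < q) by (unfold q, Rpower; apply exp_pos).
  assert (Hqq : q * q = sqrt X).
  { unfold q. rewrite <- Rpower_plus. replace (1/4 + 1/4) with (/2) by field.
    apply Rpower_sqrt. lra. }
  assert (H54 : Rpower X (5/4) = X * q).
  { unfold q. replace (5/4) with (1 + 1/4) by field. rewrite Rpower_plus, Rpower_1 by lra. ring. }
  rewrite H54. rewrite <- Hqq.
  set (y := PI * (q * q) / (3 * (M + 1))).
  assert (Hy : 0 < y) by (unfold y; apply Rdiv_lt_0_compat; nra).
  assert (HY : 0 < sqrt y) by (apply sqrt_lt_R0; lra).
  assert (HAY : sqrt (6 * (M + 1)) * sqrt y = sqrt (2 * PI) * q).
  { rewrite <- sqrt_mult by lra.
    replace (6 * (M + 1) * y) with (2 * PI * (q * q)) by (unfold y; field; lra).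
    rewrite sqrt_mult by nra. rewrite sqrt_square by lra. reflexivity. }
  assert (H2P : PI / 2 <= sqrt (2 * PI)).
  { rewrite <- (sqrt_pow2 (PI / 2)) by lra. apply sqrt_le_1_alt. nra. }
  set (A := sqrt (6 * (M + 1))) in *. set (Y := sqrt y) in *.
  assert (E : 2 * A / (X * q) - 2 * PI / X * / (2 * Y) = (2 * (A * Y) - PI * q) / (X * q * Y)).
  { field. repeat split; lra. }
  assert (0 <= (2 * (A * Y) - PI * q) / (X * q * Y)).
  { apply Rdiv_le_0_compat. rewrite HAY. nra. apply Rmult_lt_0_compat; [nra|lra]. }
  lra.
Qed.

Theorem lemma6p2 (n M : nat) (hn : (1 <= n)%nat) :
  exists l : R,
    is_series (fun j : nat => term6p2 n (j + M + 1)) l /\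
    2 * PI / (12 * INR n - 1) * l <= fM M n.
Proof.
  unfold fM. cbv zeta.
  assert (Hn : 1 <= INR n) by (replace 1 with (INR 1) by reflexivity; apply le_INR; lia).
  set (X := 12 * INR n - 1).
  assert (HX : 11 <= X) by (unfold X; lra).
  assert (Hs : 0 < sqrt X) by (apply sqrt_lt_R0; lra).
  assert (Hss : sqrt X * sqrt X = X) by (apply sqrt_sqrt; lra).
  pose proof PI_gt as Hpi. pose proof PI_4 as Hpi4.
  set (c := PI * sqrt X / 3).
  assert (Hc : 0 < c) by (unfold c; nra).
  assert (Hk : forall j, INR (j + M + 1) = INR j + INR M + 1).
  { intro j. rewrite !plus_INR. simpl. ring. }
  pose proof (pos_INR M) as HM.
  set (a := fun j => term6p2 n (j + M + 1)).
  assert (Hxpos : forall j, 0 < PI * sqrt X / (3 * INR (j + M + 1))).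
  { intro j. rewrite Hk. pose proof (pos_INR j). apply Rdiv_lt_0_compat; nra. }
  assert (Ha : forall j, 0 <= a j <= I2 (PI * sqrt X / (3 * INR (j + M + 1)))).
  { intro j. apply term_bounds. lia. apply Hxpos. }
  assert (Htail : forall j, c < INR (j + M + 1) -> a j <= c ^ 2 / 6 * / (INR j + 1) ^ 2).
  { intros j hj. pose proof (pos_INR j).
    set (k := INR (j + M + 1)) in *.
    assert (Hkj : INR j + 1 <= k) by (unfold k; rewrite Hk; lra).
    assert (Hx : PI * sqrt X / (3 * k) = c / k) by (unfold c; field; lra).
    destruct (Ha j) as [_ H1]. fold k in H1. rewrite Hx in H1.
    assert (0 < c / k <= 1).
    { split. apply Rdiv_lt_0_compat; lra. apply (Rmult_le_reg_r k). lra.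
      unfold Rdiv. rewrite Rmult_assoc, Rinv_l by lra. lra. }
    destruct (I2_small (c / k)) as [_ H2]. lra.
    eapply Rle_trans. apply H1. eapply Rle_trans. apply H2.
    replace ((c / k) ^ 2 / 6) with (c ^ 2 / 6 * / k ^ 2) by (field; lra).
    apply Rmult_le_compat_l. nra. apply Rinv_le_contravar. nra. nra. }
  pose proof (sum_inv_sq) as Hsq.
  assert (Hsum2 : forall N, sum_f_R0 (fun j => c ^ 2 / 6 * / (INR j + 1) ^ 2) N <= c ^ 2 / 6 * 2).
  { intro N. rewrite sum_scal. apply Rmult_le_compat_l. nra.
    pose proof (Hsq N). pose proof (pos_INR N).
    assert (0 < 2 / (INR N + 2)) by (apply Rdiv_lt_0_compat; lra). lra. }
  assert (Hc2 : c ^ 2 = PI ^ 2 * X / 9) by (unfold c; transitivity (PI ^ 2 * (sqrt X * sqrt X) / 9); [field | rewrite Hss; reflexivity]).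
  assert (HXp : 0 < 2 * PI / X) by (apply Rdiv_lt_0_compat; lra).
  destruct (Rle_dec (INR M) (c - 1)) as [HB | HA].
  -
    set (y := PI * sqrt X / (3 * (INR M + 1))).
    assert (Hy : 0 < y) by (unfold y; apply Rdiv_lt_0_compat; nra).
    set (B := exp y / (2 * sqrt y)).
    assert (Hmid : forall j, INR (j + M + 1) <= c -> a j <= B).
    { intros j hj. destruct (Ha j) as [_ H1]. eapply Rle_trans. apply H1.
      destruct (I2_big y Hy) as [_ H2]. eapply Rle_trans; [|apply H2].
      apply I2_mono; [|exact Hy]. split. left; apply Hxpos.
      unfold y. rewrite Hk. pose proof (pos_INR j).
      unfold Rdiv. apply Rmult_le_compat_l. nra.
      apply Rinv_le_contravar; nra. }
    assert (HB0 : 0 <= B).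
    { unfold B. apply Rdiv_le_0_compat. left; apply exp_pos.
      assert (0 < sqrt y) by (apply sqrt_lt_R0; lra). lra. }
    assert (Hcm : 0 <= c - INR M) by lra.
    destruct (nonneg_bounded a (B * (c - INR M) + c ^ 2 / 6 * 2)) as [Hex Hle].
    + intro j; apply Ha.
    + intro N.
      apply (Rle_trans _ (sum_f_R0 (fun j => B * ind M c j + c ^ 2 / 6 * / (INR j + 1) ^ 2) N)).
      * apply sum_Rle. intros j _. unfold ind. destruct Rle_dec as [h|h].
        -- pose proof (Hmid j h). assert (0 <= c ^ 2 / 6 * / (INR j + 1) ^ 2).
           { apply Rmult_le_pos. nra. left; apply Rinv_0_lt_compat. pose proof (pos_INR j). nra. }
           lra.
        -- pose proof (Htail j). lra.
      * rewrite plus_sum, sum_scal.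
        pose proof (Hsum2 N). destruct (count_bound M c N Hcm) as [_ H2].
        assert (B * sum_f_R0 (ind M c) N <= B * (c - INR M)) by (apply Rmult_le_compat_l; lra).
        lra.
    + exists (Series a). split. apply Series_correct; exact Hex.
      eapply Rle_trans. apply Rmult_le_compat_l. lra. exact Hle.
      pose proof (numB X (INR M) HX HM) as HN. fold y in HN.
      rewrite Rmult_plus_distr_l, Rplus_comm.
      apply Rplus_le_compat.
      * rewrite Hc2. replace (2 * PI / X * (PI ^ 2 * X / 9 / 6 * 2)) with (2 * PI ^ 3 / 27) by (field; lra).
        assert (8 <= PI ^ 2) by nra. assert (0 < PI ^ 3) by (apply pow_lt; lra).
        replace (PI ^ 5) with (PI ^ 3 * PI ^ 2) by ring. nra.
      * unfold B. replace (2 * PI / X * (exp y / (2 * sqrt y) * (c - INR M)))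
          with ((2 * PI / X * / (2 * sqrt y)) * (exp y * (c - INR M))) by (unfold Rdiv; ring).
        replace (2 * sqrt (6 * (INR M + 1)) / Rpower X (5 / 4) * (c - INR M) * exp y)
          with ((2 * sqrt (6 * (INR M + 1)) / Rpower X (5 / 4)) * (exp y * (c - INR M))) by ring.
        apply Rmult_le_compat_r. pose proof (exp_pos y). nra. exact HN.
  -
    destruct (nonneg_bounded a (c ^ 2 / 6 * 2)) as [Hex Hle].
    + intro j; apply Ha.
    + intro N. eapply Rle_trans; [|apply (Hsum2 N)].
      apply sum_Rle. intros j _. apply Htail. rewrite Hk. pose proof (pos_INR j). lra.
    + exists (Series a). split. apply Series_correct; exact Hex.
      eapply Rle_trans. apply Rmult_le_compat_l. lra. exact Hle.
      rewrite Hc2. replace (2 * PI / X * (PI ^ 2 * X / 9 / 6 * 2)) with (2 * PI ^ 3 / 27) by (field; lra).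
      assert (8 <= PI ^ 2) by nra. assert (0 < PI ^ 3) by (apply pow_lt; lra).
      replace (PI ^ 5) with (PI ^ 3 * PI ^ 2) by ring. nra.
Qed.
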